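(* Let $(G,\mathcal J)$ be a generalized Kähler structure on a Courant algebroid $E$, with associated decomposition $E=E_+\oplus E_-$, and for $e\in E$ write $e_\pm$ for its $E_\pm$-components. Then $$[u,\mathcal Jv]_+-\mathcal J[u,v]_+=0\quad\text{for all }u\in\Gamma(E_-),\ v\in\Gamma(E_+),$$ and $$[u,\mathcal Jv]_--\mathcal J[u,v]_-=0\quad\text{for all }u\in\Gamma(E_+),\ v\in\Gamma(E_-).$$
   Context: A Courant algebroid on $M$ is a real vector bundle $E\to M$ with nondegenerate symmetric bilinear form $\langle\cdot,\cdot\rangle$, an $\mathbb R$-bilinear bracket $[\cdot,\cdot]$ on $\Gamma(E)$ (Dorfman bracket) and bundle map $\pi:E\to TM$ such that for $u,v,w\in\Gamma(E)$, $f\in C^\infty(M)$: $[u,[v,w]]=[[u,v],w]+[v,[u,w]]$; $\pi([u,v])=[\pi(u),\pi(v)]$; $[u,fv]=\pi(u)(f)v+f[u,v]$; $\pi(u)\langle v,w\rangle=\langle[u,v],w\rangle+\langle v,[u,w]\rangle$; $2\langle[u,u],v\rangle=\pi(v)\langle u,u\rangle$. A generalized metric is a subbundle $E_+$ on which $\langle\cdot,\cdot\rangle$ is nondegenerate; $E_-=E_+^\perp$, $G=\langle\cdot,\cdot\rangle|_{E_+}-\langle\cdot,\cdot\rangle|_{E_-}$, $G^{\mathrm{end}}=\pm\mathrm{Id}$ on $E_\pm$. A generalized almost complex structure is a $\langle\cdot,\cdot\rangle$-orthogonal $\mathcal J$ with $\mathcal J^2=-\mathrm{Id}$, integrable if $[\mathcal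 Ju,\mathcal Jv]-[u,v]-\mathcal J([\mathcal Ju,v]+[u,\mathcal Jv])=0$. $(G,\mathcal J)$ is generalized almost Hermitian if $G(\mathcal Ju,\mathcal Jv)=G(u,v)$ (then $\mathcal J$ preserves $E_\pm$), and generalized Kähler if moreover $\mathcal J$ and $G^{\mathrm{end}}\mathcal J$ are integrable. *)

(* Defs.v *)
(* Algebraic (section-level) model of a Courant algebroid:
   A plays the role of C^oo(M), V the role of Gamma(E) (an A-module),
   vector fields act on A as derivations via the anchor. *)
From HB Require Import structures.
From mathcomp Require Import all_boot all_order all_algebra.
Set Implicit Arguments. Unset Strict Implicit. Unset Printing Implicit Defensive.
Import GRing.Theory.
Local Open Scope ring_scope.

Definition is_derivation (A : comUnitRingType) (D : A -> A) : Prop :=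
  (forall f g, D (f + g) = D f + D g) /\ (forall f g, D (f * g) = D f * g + f * D g).

(* Courant algebroid on the section module V, with pairing <.,.>, Dorfman
   bracket [.,.] and anchor pi (pi u is the vector field, acting on functions). *)
Record is_courant (A : comUnitRingType) (V : lmodType A)
    (pair : V -> V -> A) (br : V -> V -> V) (anc : V -> A -> A) : Prop := {
  ca_pair_sym : forall u v, pair u v = pair v u;
  ca_pair_lin : forall f u v w, pair (f *: u + v) w = f * pair u w + pair v w;
  ca_pair_nondeg : forall u, (forall w, pair u w = 0) -> u = 0;
  ca_anc_lin : forall f u v g, anc (f *: u + v) g = f * anc u g + anc v g;
  ca_anc_der : forall u, is_derivation (anc u);
  ca_br_addl : forall u v w, br (u + v) w = br u w + br v w;
  ca_br_addr : forall u v w, br u (v + w) = br u v + br u w;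
  ca_jacobi : forall u v w, br u (br v w) = br (br u v) w + br v (br u w);
  ca_anc_hom : forall u v g, anc (br u v) g = anc u (anc v g) - anc v (anc u g);
  ca_leibniz : forall u f v, br u (f *: v) = anc u f *: v + f *: br u v;
  ca_invariance : forall u v w, anc u (pair v w) = pair (br u v) w + pair v (br u w);
  ca_sym_part : forall u v, 2%:R * pair (br u u) v = anc v (pair u u)
}.

(* A generalized metric E_+ is encoded by the projection P : E -> E_+ along
   E_- = E_+^perp; Gamma(E_+) = {v | P v = v}, Gamma(E_-) = {v | P v = 0}. *)
Record gen_metric (A : comUnitRingType) (V : lmodType A)
    (pair : V -> V -> A) (P : V -> V) : Prop := {
  gm_lin : forall f u v, P (f *: u + v) = f *: P u + P v;
  gm_idem : forall u, P (P u) = P u;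
  gm_orth : forall u v, pair (P u) (v - P v) = 0
}.

Definition plus_comp (A : comUnitRingType) (V : lmodType A) (P : V -> V) (e : V) : V := P e.
Definition minus_comp (A : comUnitRingType) (V : lmodType A) (P : V -> V) (e : V) : V := e - P e.

Definition Gmetric (A : comUnitRingType) (V : lmodType A)
    (pair : V -> V -> A) (P : V -> V) (u v : V) : A :=
  pair (plus_comp P u) (plus_comp P v) - pair (minus_comp P u) (minus_comp P v).
Definition Gend (A : comUnitRingType) (V : lmodType A) (P : V -> V) (u : V) : V :=
  plus_comp P u - minus_comp P u.

Record gen_almost_complex (A : comUnitRingType) (V : lmodType A)
    (pair : V -> V -> A) (J : V -> V) : Prop := {
  gc_lin : forall f u v, J (f *: u + v) = f *: J u + J v;
  gc_sq : forall u, J (J u) = - u;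
  gc_orth : forall u v, pair (J u) (J v) = pair u v
}.

Definition integrable (A : comUnitRingType) (V : lmodType A)
    (br : V -> V -> V) (J : V -> V) : Prop :=
  forall u v, br (J u) (J v) - br u v - J (br (J u) v + br u (J v)) = 0.

Definition gen_kahler (A : comUnitRingType) (V : lmodType A)
    (pair : V -> V -> A) (br : V -> V -> V) (P : V -> V) (J : V -> V) : Prop :=
  [/\ gen_metric pair P, gen_almost_complex pair J,
      (forall u v, Gmetric pair P (J u) (J v) = Gmetric pair P u v),
      integrable br J & integrable br (fun u => Gend P (J u))].

(* Main.v *)
Require Import Defs.
From HB Require Import structures.
From mathcomp Require Import all_boot all_order all_algebra.
Import GRing.Theory.
Local Open Scope ring_scope.

Lemma comb (W : zmodType) (a b c d : W) :
  a - b - (c + d) = 0 -> -a - b + (c - d) = 0 -> (b + d) + (b + d) = 0.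
Proof.
move/eqP; rewrite subr_eq0 subr_eq => /eqP -> e2.
apply/eqP; rewrite -oppr_eq0; apply/eqP; rewrite -[RHS]e2.
rewrite !opprD.
rewrite [RHS](addrC _ (c - d)) !addrA [c - d - c]addrAC subrr add0r.
rewrite [- b - d - b]addrAC.
by rewrite -[LHS]addrA -[RHS]addrA addrC.
Qed.

Section L.
Set Implicit Arguments.
Variables (A : comUnitRingType) (V : lmodType A) (f : V -> V).
Hypothesis lin : forall a u v, f (a *: u + v) = a *: f u + f v.
Lemma lin0 : f 0 = 0.
Proof.
have := lin 1 0 0; rewrite !scale1r addr0 => /esym/eqP.
by rewrite -subr_eq0 addrK => /eqP.
Qed.
Lemma linD x y : f (x + y) = f x + f y.
Proof. by rewrite -{1}[x]scale1r lin scale1r. Qed.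
Lemma linN x : f (- x) = - f x.
Proof. by have := lin (-1) x 0; rewrite !addr0 lin0 addr0 !scaleN1r. Qed.
End L.

Lemma half (A : comUnitRingType) (V : lmodType A) (x y : V) :
  (2%:R : A) \is a GRing.unit -> x + x = y + y -> x = y.
Proof.
move=> h2 e; rewrite -[x]scale1r -[y]scale1r -(mulVr h2) -!scalerA.
by rewrite !scaler_nat !mulr2n e.
Qed.

Theorem lemma5p1 (A : comUnitRingType) (V : lmodType A)
    (pair : V -> V -> A) (br : V -> V -> V) (anc : V -> A -> A)
    (P : V -> V) (J : V -> V) :
  (2%:R : A) \is a GRing.unit ->
  is_courant pair br anc ->
  gen_kahler pair br P J ->
  (forall u v, P u = 0 -> P v = v ->
     plus_comp P (br u (J v)) - J (plus_comp P (br u v)) = 0) /\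
  (forall u v, P u = u -> P v = 0 ->
     minus_comp P (br u (J v)) - J (minus_comp P (br u v)) = 0).
Proof.
move=> h2 hC [hM hJ hG iJ iJ2].
case: hC => psym plin pnd _ _ badl badr _ _ _ _ _.
case: hM => Plin Pidem Porth.
case: hJ => Jlin Jsq Jorth.
have J0 := @lin0 _ _ _ Jlin; have JD := @linD _ _ _ Jlin; have JN := @linN _ _ _ Jlin.
have P0 := @lin0 _ _ _ Plin; have PD := @linD _ _ _ Plin; have PN := @linN _ _ _ Plin.
have pD1 : forall x y w, pair (x + y) w = pair x w + pair y w.
  by move=> x y w; rewrite -{1}[x]scale1r plin mul1r.
have p0 : forall w, pair 0 w = 0.
  move=> w; have := pD1 0 0 w; rewrite addr0 => /esym/eqP.
  by rewrite -subr_eq0 addrK => /eqP.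
have pN : forall x w, pair (- x) w = - pair x w.
  by move=> x w; have := plin (-1) x 0 w; rewrite !addr0 p0 addr0 mulN1r scaleN1r.
have pD2 : forall x y w, pair w (x + y) = pair w x + pair w y.
  by move=> x y w; rewrite psym pD1 !(psym w).
have pPl : forall x y, pair (P x) y = pair (P x) (P y).
  by move=> x y; rewrite -{1}(subrK (P y) y) pD2 Porth add0r.
have pMl : forall x y, pair (x - P x) y = pair (x - P x) (y - P y).
  by move=> x y; rewrite -{1}(subrK (P y) y) [LHS]pD2 [pair _ (P y)]psym Porth addr0.
have pG : forall a b, pair (Gend P a) b = Gmetric pair P a b.
  move=> a b; rewrite /Gend /Gmetric /plus_comp /minus_comp.
  by rewrite pD1 pN pPl pMl.
have GJ : forall x, Gend P (J x) = J (Gend P x).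
  move=> x; apply/eqP; rewrite -subr_eq0; apply/eqP; apply: pnd => w.
  have [w' ->] : exists w', w = J w' by exists (- J w); rewrite JN Jsq opprK.
  by rewrite pD1 pN pG hG Jorth pG subrr.
have G2 : forall y, P y + P y = Gend P y + y.
  by move=> y; rewrite /Gend /plus_comp /minus_comp opprB addrA subrK.
have PJ : forall x, P (J x) = J (P x).
  move=> x; apply: (@half _ _ _ _ h2).
  by rewrite G2 GJ -JD -G2 JD.
have PG : forall y, P (Gend P y) = P y.
  by move=> y; rewrite /Gend /plus_comp /minus_comp PD PN PD PN Pidem subrr subr0.
have brNl : forall x y, br (- x) y = - br x y.
  move=> x y; apply/eqP; rewrite -addr_eq0 -badl addrC subrr.
  have := badl 0 0 y; rewrite addr0 => /esym/eqP.
  by rewrite -subr_eq0 addrK.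
have brNr : forall x y, br y (- x) = - br y x.
  move=> x y; apply/eqP; rewrite -addr_eq0 -badr addrC subrr.
  have := badr y 0 0; rewrite addr0 => /esym/eqP.
  by rewrite -subr_eq0 addrK.
have mD : forall x y, minus_comp P (x + y) = minus_comp P x + minus_comp P y.
  by move=> x y; rewrite /minus_comp PD opprD addrACA.
have mN : forall x, minus_comp P (- x) = - minus_comp P x.
  by move=> x; rewrite /minus_comp PN opprD.
have mJ : forall x, minus_comp P (J x) = J (minus_comp P x).
  by move=> x; rewrite /minus_comp PJ JD JN.
have mG : forall y, minus_comp P (Gend P y) = - minus_comp P y.
  move=> y; rewrite {1}/minus_comp PG /Gend /plus_comp /minus_comp.
  by rewrite opprB addrAC subrr add0r.
split.
- move=> u v Pu Pv; rewrite /plus_comp.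
  have Gu : Gend P (J u) = - J u.
    by rewrite /Gend /plus_comp /minus_comp PJ Pu J0 sub0r subr0.
  have Gv : Gend P (J v) = J v.
    by rewrite /Gend /plus_comp /minus_comp PJ Pv subrr subr0.
  have E1 := congr1 P (iJ u v).
  have E2 := congr1 P (iJ2 u v).
  rewrite /= Gu Gv in E2.
  rewrite P0 !(PD, PN, PJ, JD) in E1.
  rewrite P0 !(PG, PD, PN, PJ, brNl, JD, JN) opprD opprK in E2.
  have := @comb _ _ _ _ _ E1 E2; rewrite -[X in _ = X](addr0 0) => /(@half _ _ _ _ h2) /eqP.
  by rewrite addr_eq0 => /eqP ->; rewrite JN Jsq opprK subrr.
- move=> u v Pu Pv.
  have Gu : Gend P (J u) = J u.
    by rewrite /Gend /plus_comp /minus_comp PJ Pu subrr subr0.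
  have Gv : Gend P (J v) = - J v.
    by rewrite /Gend /plus_comp /minus_comp PJ Pv J0 sub0r subr0.
  have E1 := congr1 (minus_comp P) (iJ u v).
  have E2 := congr1 (minus_comp P) (iJ2 u v).
  rewrite /= Gu Gv in E2.
  have JDm : forall x y, J (minus_comp P x + minus_comp P y) =
     J (minus_comp P x) + J (minus_comp P y) by move=> x y; rewrite JD.
  have JNm : forall x, J (- minus_comp P x) = - J (minus_comp P x)
     by move=> x; rewrite JN.
  rewrite {2}/minus_comp P0 subr0 !(mD, mN, mJ, JDm) in E1.
  rewrite {2}/minus_comp P0 subr0 !(mG, mD, mN, mJ, brNr, JDm, JNm) opprK in E2.
  have := @comb _ _ _ _ _ E1 E2; rewrite -[X in _ = X](addr0 0) => /(@half _ _ _ _ h2) /eqP.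
  by rewrite addr_eq0 => /eqP ->; rewrite JN Jsq opprK subrr.
Qed.
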